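(* Let $G$ be a finite group and $X$ any $E\mathcal M$-$G$-simplicial set. Then the inclusion $X^\mu\hookrightarrow X$ is a $G$-global weak equivalence.
   Context: $\omega=\{1,2,\dots\}$, $\mathcal M$ the monoid of injections $\omega\to\omega$, $\mathcal M_A$ those fixing $A\subset\omega$ pointwise; $A$ co-infinite if $\omega\setminus A$ is infinite. $E\mathcal M$ is the simplicial monoid with $(E\mathcal M)_n=\mathcal M^{1+n}$ (pointwise multiplication, structure maps by precomposition), and $\mathcal M$ embeds diagonally into each $(E\mathcal M)_n$. An $E\mathcal M$-$G$-simplicial set is a simplicial set with $(E\mathcal M\times G)$-action. $x\in X_n$ is $k$-supported on $A$ if $i_k(u).x=x$ for all $u\in\mathcal M_A$ ($i_k$ inclusion of the $(1+k)$-th factor); $X^\mu\subset X$ is the $(E\mathcal M\times G)$-simplicial subset of simplices that for every $k$ are $k$-supported on some co-infinite set. A finite subgroup $H\subset\mathcal M$ is universal if every countable $H$-set embeds $H$-equivariantly into $\omega$. A map $f$ is a $G$-global weak equivalence if for all universal $H\subset\mathcal M$ and all homomorphisms $\phi\colon H\to G$ the induced map on fixed points of the graph subgroup $\{(h,\phi(h))\}\subset\mathcal M\times G$ is a weak homotopy equivalence. *)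

(* Defs.v *)
From mathcomp Require Import all_boot all_fingroup.
From Stdlib Require Import Relations ProofIrrelevance.

Set Implicit Arguments.
Unset Strict Implicit.
Unset Printing Implicit Defensive.

(* The simplex category: monotone maps [m] -> [n], [m] = 'I_m.+1.      *)

Definition mono (m n : nat) : Type :=
  {f : 'I_m.+1 -> 'I_n.+1 | forall i j : 'I_m.+1, i <= j -> f i <= f j}.

Definition comp_mono m n p (g : mono n p) (f : mono m n) : mono m p.
Proof.
exists (fun i => sval g (sval f i)).
by move=> i j hij; apply: (svalP g); apply: (svalP f).
Defined.

Definition delta n (i : 'I_n.+2) : mono n n.+1.
Proof. exists (lift i) => j k hjk /=. by rewrite leq_bump2. Defined.

Definition const_mono m (e : 'I_2) : mono m 1.
Proof. exists (fun _ => e) => i j _. exact: leqnn. Defined.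

Record sSet : Type := SSet {
  sx :> nat -> Type;
  sact : forall m n, mono m n -> sx n -> sx m;
  sact_id : forall n (f : mono n n) (x : sx n),
      (forall i, sval f i = i) -> sact f x = x;
  sact_comp : forall m n p (f : mono m n) (g : mono n p) (h : mono m p)
      (x : sx p), (forall i, sval h i = sval g (sval f i)) ->
      sact h x = sact f (sact g x) }.
Arguments sact s {m n} f x.

Record smap (A B : sSet) : Type := SMap {
  smf :> forall n, A n -> B n;
  smf_nat : forall m n (f : mono m n) (x : A n),
      smf (sact A f x) = sact B f (smf x) }.

Definition scomp (A B C : sSet) (g : smap B C) (f : smap A B) : smap A C.
Proof.
exists (fun n x => g n (f n x)).
by move=> m n h x; rewrite smf_nat smf_nat.
Defined.

(* Kan complexes: every horn Lambda^{n+1}_k -> K has a filler.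
   A horn is a family of n-simplices y_i (i <> k) which agrees on the
   pairwise intersections of the faces. *)
Definition is_horn (K : sSet) n (k : 'I_n.+2)
    (y : forall i : 'I_n.+2, i != k -> K n) : Prop :=
  forall m (i j : 'I_n.+2) (hi : i != k) (hj : j != k) (f g : mono m n),
    (forall t, lift i (sval f t) = lift j (sval g t)) ->
    sact K f (y i hi) = sact K g (y j hj).

Definition Kan (K : sSet) : Prop :=
  forall n (k : 'I_n.+2) (y : forall i : 'I_n.+2, i != k -> K n),
    is_horn y ->
    exists x : K n.+1, forall i (hi : i != k), sact K (delta i) x = y i hi.

(* An edge in Fun(A,K) from phi to psi: a map A x Delta^1 -> K
   restricting to phi at vertex 0 and to psi at vertex 1. *)
Definition homotopic (A K : sSet) (phi psi : smap A K) : Prop :=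
  exists H : forall n, A n -> mono n 1 -> K n,
    (forall m n (f : mono m n) (x : A n) (s : mono n 1),
        H m (sact A f x) (comp_mono s f) = sact K f (H n x s)) /\
    (forall n (x : A n), H n x (const_mono n ord0) = phi n x) /\
    (forall n (x : A n), H n x (const_mono n ord_max) = psi n x).

Definition same_pi0 (A K : sSet) : relation (smap A K) :=
  clos_refl_sym_trans (smap A K) (@homotopic A K).

(* Weak homotopy equivalence (Kerodon, Def. 3.1.6.12): for every Kan
   complex K, i^* : pi_0 Fun(B,K) -> pi_0 Fun(A,K) is bijective. *)
Definition weak_equiv (A B : sSet) (i : smap A B) : Prop :=
  forall K : sSet, Kan K ->
    (forall alpha : smap A K, exists beta : smap B K,
        same_pi0 (scomp beta i) alpha) /\
    (forall beta1 beta2 : smap B K,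
        same_pi0 (scomp beta1 i) (scomp beta2 i) -> same_pi0 beta1 beta2).

Definition simp_closed (X : sSet) (P : forall n, X n -> Prop) : Prop :=
  forall m n (f : mono m n) (x : X n), P n x -> P m (sact X f x).

Lemma sig_eq_val (T : Type) (P : T -> Prop) (x y : {t : T | P t}) :
  sval x = sval y -> x = y.
Proof.
case: x y => [x px] [y py] /= exy; subst y.
by rewrite (proof_irrelevance _ px py).
Qed.

Definition sub_sSet (X : sSet) (P : forall n, X n -> Prop)
    (cP : simp_closed P) : sSet.
Proof.
refine (@SSet (fun n => {x : X n | P n x})
  (fun m n f x => exist _ (sact X f (sval x)) (cP m n f _ (svalP x))) _ _).
- by move=> n f x hf; apply: sig_eq_val; rewrite /= sact_id.
- by move=> m n p f g h x hh; apply: sig_eq_val; rewrite /= (sact_comp _ hh).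
Defined.

Definition sub_incl (X : sSet) (P Q : forall n, X n -> Prop)
    (cP : simp_closed P) (cQ : simp_closed Q)
    (sPQ : forall n x, P n x -> Q n x) : smap (sub_sSet cP) (sub_sSet cQ).
Proof.
exists (fun n x => exist _ (sval x) (sPQ n _ (svalP x))).
by move=> m n f x; apply: sig_eq_val.
Defined.

(* The inclusion of simplicial subsets P c Q of X is a weak equivalence
   (this includes the assertion that P and Q are simplicial subsets). *)
Definition incl_weak_equiv (X : sSet) (P Q : forall n, X n -> Prop) : Prop :=
  exists (cP : simp_closed P) (cQ : simp_closed Q)
         (sPQ : forall n x, P n x -> Q n x),
    weak_equiv (sub_incl cP cQ sPQ).

(* The monoid M of injections omega -> omega (omega relabelled as nat: *)
(* n <-> n+1) and E M - G - simplicial sets.                            *)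

Definition Minj : Type := {u : nat -> nat | injective u}.
Definition Mone : Minj := exist _ id (@inj_id nat).

Local Open Scope group_scope.

(* (E M)_n = M^{1+n} = functions 'I_n.+1 -> Minj, pointwise product;
   structure maps by precomposition. An action of E M x G on X. *)
Record EMGsSet (gT : finGroupType) : Type := EMGSSet {
  emg_sset :> sSet;
  ea : forall n, ('I_n.+1 -> Minj) -> gT -> emg_sset n -> emg_sset n;
  ea_one : forall n (a : 'I_n.+1 -> Minj) (x : emg_sset n),
      (forall i y, sval (a i) y = y) -> ea a 1 x = x;
  ea_mul : forall n (a b c : 'I_n.+1 -> Minj) (g h : gT) (x : emg_sset n),
      (forall i y, sval (c i) y = sval (a i) (sval (b i) y)) ->
      ea c (g * h) x = ea a g (ea b h x);
  ea_nat : forall m n (f : mono m n) (a : 'I_n.+1 -> Minj) (g : gT)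
      (x : emg_sset n),
      sact emg_sset f (ea a g x) = ea (fun i => a (sval f i)) g (sact emg_sset f x) }.
Arguments ea {gT} e {n} a g x.

Definition ik n (k : 'I_n.+1) (u : Minj) : 'I_n.+1 -> Minj :=
  fun i => if i == k then u else Mone.

Definition k_supported gT (X : EMGsSet gT) n (k : 'I_n.+1)
    (A : nat -> Prop) (x : X n) : Prop :=
  forall u : Minj, (forall a, A a -> sval u a = a) -> ea X (ik k u) 1 x = x.

Definition coinfinite (A : nat -> Prop) : Prop :=
  forall N, exists m, N <= m /\ ~ A m.

Definition Xmu gT (X : EMGsSet gT) (n : nat) (x : X n) : Prop :=
  forall k : 'I_n.+1, exists A, coinfinite A /\ k_supported k A x.

Arguments Xmu {gT} X n x.

(* Finite subgroups of M, given as injective monoid homomorphisms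
   iota : H -> M from a finite group H. *)
Definition Memb (hT : finGroupType) (iota : hT -> Minj) : Prop :=
  [/\ forall x z : hT, (forall y, sval (iota x) y = sval (iota z) y) -> x = z,
      forall y, sval (iota 1) y = y &
      forall (x z : hT) y, sval (iota (x * z)) y = sval (iota x) (sval (iota z) y)].

Definition universal (hT : finGroupType) (iota : hT -> Minj) : Prop :=
  forall (S : Type) (act : hT -> S -> S),
    (forall s, act 1 s = s) ->
    (forall x z s, act (x * z) s = act x (act z s)) ->
    (exists c : S -> nat, injective c) ->
    exists e : S -> nat, injective e /\
      forall h s, e (act h s) = sval (iota h) (e s).

(* fixed points of the graph subgroup {(h, phi h)} (h acting diagonally) *)
Definition graph_fixed gT (X : EMGsSet gT) (hT : finGroupType)
    (iota : hT -> Minj) (phi : hT -> gT) (n : nat) (x : X n) : Prop :=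
  forall h : hT, ea X (fun _ => iota h) (phi h) x = x.

Arguments graph_fixed {gT} X {hT} iota phi n x.

Definition G_global_weq_incl {gT} (X : EMGsSet gT)
    (P : forall n, X n -> Prop) : Prop :=
  forall (hT : finGroupType) (iota : hT -> Minj),
    Memb iota -> universal iota ->
    forall phi : hT -> gT, (forall x z, phi (x * z) = phi x * phi z) ->
      incl_weak_equiv (fun n x => P n x /\ graph_fixed X iota phi n x)
                      (graph_fixed X iota phi).
Arguments G_global_weq_incl {gT} X P.

(* Main.v *)
Require Import Defs.
From mathcomp Require Import all_boot all_fingroup.
From Stdlib Require Import Relations ProofIrrelevance FunctionalExtensionality ClassicalEpsilon Classical.

Set Implicit Arguments.
Unset Strict Implicit.
Unset Printing Implicit Defensive.

Definition sid (A : sSet) : smap A A := @SMap A A (fun n x => x) (fun _ _ _ _ => erefl).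

Lemma smap_ext (A B : sSet) (p q : smap A B) : (forall n x, p n x = q n x) -> p = q.
Proof.
case: p q => [p pn] [q qn] /= h.
have e : p = q.
  apply: functional_extensionality_dep => n; apply: functional_extensionality => x; exact: h.
subst q; f_equal; apply: proof_irrelevance.
Qed.

Lemma homot_post (A B K : sSet) (g : smap B K) (phi psi : smap A B) :
  homotopic phi psi -> homotopic (scomp g phi) (scomp g psi).
Proof.
case=> H [Hn [H0 H1]]; exists (fun n x s => g n (H n x s)); split; [|split].
- by move=> m n f x s /=; rewrite Hn smf_nat.
- by move=> n x /=; rewrite H0.
- by move=> n x /=; rewrite H1.
Qed.

Lemma homot_pre (A B K : sSet) (h : smap A B) (phi psi : smap B K) :
  homotopic phi psi -> homotopic (scomp phi h) (scomp psi h).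
Proof.
case=> H [Hn [H0 H1]]; exists (fun n x s => H n (h n x) s); split; [|split].
- by move=> m n f x s /=; rewrite smf_nat Hn.
- by move=> n x /=; rewrite H0.
- by move=> n x /=; rewrite H1.
Qed.

Lemma pi0_post (A B K : sSet) (g : smap B K) (phi psi : smap A B) :
  same_pi0 phi psi -> same_pi0 (scomp g phi) (scomp g psi).
Proof.
elim=> [x y hxy|x|x y _ ih|x y z _ ih1 _ ih2].
- by apply: rst_step; apply: homot_post.
- exact: rst_refl.
- exact: rst_sym.
- by eapply rst_trans; [exact: ih1|exact: ih2].
Qed.

Lemma pi0_pre (A B K : sSet) (h : smap A B) (phi psi : smap B K) :
  same_pi0 phi psi -> same_pi0 (scomp phi h) (scomp psi h).
Proof.
elim=> [x y hxy|x|x y _ ih|x y z _ ih1 _ ih2].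
- by apply: rst_step; apply: homot_pre.
- exact: rst_refl.
- exact: rst_sym.
- by eapply rst_trans; [exact: ih1|exact: ih2].
Qed.

Lemma weq_hequiv (A B : sSet) (i : smap A B) (f : smap B A) :
  same_pi0 (scomp f i) (sid A) -> same_pi0 (scomp i f) (sid B) -> weak_equiv i.
Proof.
move=> h1 h2 K _; split.
- move=> alpha; exists (scomp alpha f).
  have -> : scomp (scomp alpha f) i = scomp alpha (scomp f i) by apply: smap_ext.
  have e : scomp alpha (sid A) = alpha by apply: smap_ext.
  by rewrite -{2}e; apply: pi0_post.
- move=> b1 b2 hb.
  have := pi0_pre f hb.
  have -> : scomp (scomp b1 i) f = scomp b1 (scomp i f) by apply: smap_ext.
  have -> : scomp (scomp b2 i) f = scomp b2 (scomp i f) by apply: smap_ext.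
  move=> hb'.
  have e1 : scomp b1 (sid B) = b1 by apply: smap_ext.
  have e2 : scomp b2 (sid B) = b2 by apply: smap_ext.
  have k1 := pi0_post b1 h2; have k2 := pi0_post b2 h2.
  rewrite e1 in k1; rewrite e2 in k2.
  eapply rst_trans; first exact: rst_sym k1.
  eapply rst_trans; first exact: hb'.
  exact: k2.
Qed.

Lemma unbounded (e : nat -> nat) : injective e -> forall N, exists j, N <= e j.
Proof.
move=> ie N.
case: (boolP [exists j : 'I_N.+1, N <= e j]) => [/existsP [j hj]|/existsPn hn].
  by exists j.
have lt : forall j : 'I_N.+1, e j < N by move=> j; move: (hn j); rewrite -ltnNge.
pose f (j : 'I_N.+1) : 'I_N := Ordinal (lt j).
have finj : injective f by move=> a b /(congr1 val) /= /ie /val_inj.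
by have := leq_card f finj; rewrite !card_ord ltnn.
Qed.

Lemma fix_coinf (A : nat -> Prop) : coinfinite A ->
  exists m : Minj, (forall a, A a -> sval m a = a) /\
     coinfinite (fun b => exists n, sval m n = b).
Proof.
move=> cA.
pose nx N := proj1_sig (constructive_indefinite_description _ (cA N)).
have nxP N : N <= nx N /\ ~ A (nx N) by exact: (proj2_sig (constructive_indefinite_description _ (cA N))).
pose c := fix c i := if i is i'.+1 then nx (c i').+1 else nx 0.
have cA' i : ~ A (c i) by case: i => [|i]; apply: (nxP _).2.
have cS i : c i < c i.+1 by exact: (nxP _).1.
have cge i : i <= c i.
  elim: i => [|i ih] //; exact: leq_ltn_trans ih (cS i).
have cmono i d : c i < c (i + d.+1).
  elim: d => [|d ih]; first by rewrite addn1.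
  by rewrite addnS; apply: ltn_trans ih (cS _).
have cinj : injective c.
  move=> i j eij; case: (ltngtP i j) => // hij.
  - by have := cmono i (j - i).-1; rewrite prednK ?subn_gt0 // subnKC ?(ltnW hij) // eij ltnn.
  - by have := cmono j (i - j).-1; rewrite prednK ?subn_gt0 // subnKC ?(ltnW hij) // eij ltnn.
pose m n := if excluded_middle_informative (A n) then n else c n.*2.
have m1 n : A n -> m n = n.
  by rewrite /m; case: excluded_middle_informative.
have m2 n : ~ A n -> m n = c n.*2.
  by rewrite /m; case: excluded_middle_informative.
have minj : injective m.
  move=> a b.
  case: (classic (A a)) => ha; case: (classic (A b)) => hb.
  - by rewrite m1 // m1.
  - by rewrite m1 // m2 // => e; exfalso; apply: (cA' b.*2); rewrite -e.
  - by rewrite m2 // m1 // => e; exfalso; apply: (cA' a.*2); rewrite e.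
  - by rewrite m2 // m2 // => /cinj; rewrite -!muln2 => /eqP; rewrite eqn_mul2r /= => /eqP.
exists (exist _ m minj); split.
  by move=> a ha /=; rewrite m1.
move=> N; exists (c N.*2.+1); split.
  by apply: leq_trans (cge _); rewrite -addnn ltnW // ltnS leq_addr.
case=> n /=; case: (classic (A n)) => hn.
  by rewrite m1 // => e; apply: (cA' N.*2.+1); move: hn; rewrite e.
rewrite m2 // => e0; have e : n.*2 = N.*2.+1 by apply: cinj; exact: e0.
have := congr1 odd e; by rewrite /= !odd_double.
Qed.

Lemma univ_u (hT : finGroupType) (iota : hT -> Minj) :
  Memb iota -> universal iota ->
  exists u : Minj, (forall h n, sval u (sval (iota h) n) = sval (iota h) (sval u n)) /\
     coinfinite (fun a => exists n, sval u n = a).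
Proof.
case=> _ h1 hM univ.
have [] := univ (nat * bool)%type (fun h s => (sval (iota h) s.1, s.2)).
- by case=> n b /=; rewrite h1.
- by move=> x z [n b] /=; rewrite hM.
- by exists pickle; exact: pcan_inj pickleK_inv.
move=> e [einj eeq].
have uinj : injective (fun n => e (n, false)) by move=> a b /einj [].
exists (exist _ _ uinj); split.
  by move=> h n /=; rewrite -(eeq h (n, false)).
move=> N; have [j hj] := unbounded (e := fun j => e (j, true))
  (fun a b hab => congr1 fst (einj _ _ hab)) N.
exists (e (j, true)); split => //.
by case=> n /= /einj.
Qed.

Lemma ea_ext (gT : finGroupType) (X : EMGsSet gT) n (a b : 'I_n.+1 -> Minj) g (x : X n) :
  (forall i y, sval (a i) y = sval (b i) y) -> ea X a g x = ea X b g x.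
Proof.
move=> h.
rewrite -[g in LHS]mulg1 (@ea_mul _ _ _ b (fun _ => Mone) a g 1 x) //.
by rewrite ea_one.
Qed.

Definition amap (u : Minj) n (s : mono n 1) : 'I_n.+1 -> Minj :=
  fun i => if sval s i == ord0 then Mone else u.

Lemma amap_fix (gT : finGroupType) (X : EMGsSet gT) (hT : finGroupType)
  (iota : hT -> Minj) (phi : hT -> gT) (u : Minj)
  (hu : forall h n, sval u (sval (iota h) n) = sval (iota h) (sval u n))
  n (s : mono n 1) (x : X n) :
  graph_fixed X iota phi n x -> graph_fixed X iota phi n (ea X (amap u s) 1%g x).
Proof.
move=> hx h.
rewrite -(@ea_mul _ _ _ (fun _ => iota h) (amap u s)
   (fun i => if sval s i == ord0 then iota h else
      exist _ (fun y => sval (iota h) (sval u y)) (inj_comp (svalP (iota h)) (svalP u)))) //; last first.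
  by move=> i y; rewrite /amap; case: ifP.
rewrite mulg1 -[phi h]mul1g.
rewrite (@ea_mul _ _ _ (amap u s) (fun _ => iota h)) ?hx //.
by move=> i y; rewrite /amap; case: ifP => //= _; rewrite hu.
Qed.

Lemma amap_supp1 (gT : finGroupType) (X : EMGsSet gT) (u : Minj)
  n (s : mono n 1) (x : X n) (k : 'I_n.+1) :
  sval s k != ord0 ->
  k_supported k (fun a => exists m, sval u m = a) (ea X (amap u s) 1%g x).
Proof.
move=> hk v hv.
rewrite -(@ea_mul _ _ _ (ik k v) (amap u s) (amap u s)) ?mulg1 //.
move=> i y; rewrite /ik /amap; case: (eqVneq i k) => [->|ne] /=.
  by rewrite (negbTE hk) hv //; exists y.
by [].
Qed.

Lemma amap_supp0 (gT : finGroupType) (X : EMGsSet gT) (u : Minj)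
  n (s : mono n 1) (x : X n) (k : 'I_n.+1) A :
  sval s k == ord0 -> k_supported k A x ->
  k_supported k A (ea X (amap u s) 1%g x).
Proof.
move=> hk hx v hv.
rewrite -(@ea_mul _ _ _ (ik k v) (amap u s)
   (fun i => if i == k then v else amap u s i)); last first.
  by move=> i y; rewrite /ik /amap; case: (eqVneq i k) => [->|ne] /=; rewrite ?hk.
rewrite mulg1 -[1%g]mulg1 (@ea_mul _ _ _ (amap u s) (ik k v)); last first.
  by move=> i y; rewrite /ik /amap; case: (eqVneq i k) => [->|ne] /=; rewrite ?hk.
by rewrite (hx v hv) mulg1.
Qed.

Lemma Xmu_closed (gT : finGroupType) (X : EMGsSet gT) : simp_closed (Xmu X).
Proof.
move=> m n f x hx k.
have [A [cA hA]] := hx (sval f k).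
have [w [wA cw]] := fix_coinf cA.
exists (fun b => exists n0, sval w n0 = b); split => //.
move=> v hv.
have hy : ea X (fun i => ik (sval f k) w (sval f i)) 1%g (sact X f x) = sact X f x.
  by rewrite -ea_nat (hA w wA).
rewrite -{1}hy -(@ea_mul _ _ _ (ik k v) (fun i => ik (sval f k) w (sval f i))
   (fun i => ik (sval f k) w (sval f i))) ?mulg1 //.
move=> i z; rewrite /ik; case: (eqVneq i k) => [->|ne] //=.
by rewrite eqxx hv //; exists z.
Qed.

Lemma gf_closed (gT : finGroupType) (X : EMGsSet gT) (hT : finGroupType)
  (iota : hT -> Minj) (phi : hT -> gT) : simp_closed (graph_fixed X iota phi).
Proof.
move=> m n f x hx h.
have := ea_nat f (fun _ => iota h) (phi h) x.
rewrite (hx h) => e; exact: (esym e).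
Qed.

Lemma hP (gT : finGroupType) (X : EMGsSet gT) (hT : finGroupType)
  (iota : hT -> Minj) (phi : hT -> gT) (u : Minj)
  (hu : forall h n, sval u (sval (iota h) n) = sval (iota h) (sval u n))
  (cu : coinfinite (fun a => exists n, sval u n = a))
  n (s : mono n 1) (x : X n) :
  Xmu X n x /\ graph_fixed X iota phi n x ->
  Xmu X n (ea X (amap u s) 1%g x) /\ graph_fixed X iota phi n (ea X (amap u s) 1%g x).
Proof.
case=> h1 h2; split; last exact: amap_fix.
move=> k; case: (boolP (sval s k == ord0)) => hk.
  have [A [cA hA]] := h1 k.
  by exists A; split => //; apply: amap_supp0.
by exists (fun a => exists m, sval u m = a); split => //; apply: amap_supp1.
Qed.

Lemma hP1 (gT : finGroupType) (X : EMGsSet gT) (hT : finGroupType)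
  (iota : hT -> Minj) (phi : hT -> gT) (u : Minj)
  (hu : forall h n, sval u (sval (iota h) n) = sval (iota h) (sval u n))
  (cu : coinfinite (fun a => exists n, sval u n = a))
  n (x : X n) :
  graph_fixed X iota phi n x ->
  Xmu X n (ea X (amap u (const_mono n ord_max)) 1%g x) /\ graph_fixed X iota phi n (ea X (amap u (const_mono n ord_max)) 1%g x).
Proof.
move=> h2; split; last exact: amap_fix.
by move=> k; exists (fun a => exists m, sval u m = a); split => //; apply: amap_supp1.
Qed.

Theorem corollary3p14 (gT : finGroupType) (X : EMGsSet gT) :
  G_global_weq_incl X (Xmu X).
Proof.
move=> hT iota memb univ phi phim.
have [u [hu cu]] := univ_u memb univ.
have cQ : simp_closed (graph_fixed X iota phi) := @gf_closed _ X _ iota phi.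
have cP : simp_closed (fun n x => Xmu X n x /\ graph_fixed X iota phi n x).
  move=> m n f x [h1 h2]; split.
    exact: Xmu_closed h1.
  exact: (@gf_closed _ X _ iota phi _ _ f x h2).
exists cP, cQ, (fun n x h => proj2 h).
pose F := (fun n (x : sub_sSet cQ n) => exist _ (ea X (amap u (const_mono n ord_max)) 1%g (sval x))
       (hP1 hu cu (svalP x)) : sub_sSet cP n).
have natF : forall m n (f : mono m n) x, F m (sact (sub_sSet cQ) f x) = sact (sub_sSet cP) f (F n x).
  by move=> m n f x; apply: sig_eq_val => /=; rewrite ea_nat.
pose fX := SMap natF.
apply: (weq_hequiv (f := fX)).
- apply: rst_sym; apply: rst_step.
  exists (fun n x s => exist _ (ea X (amap u s) 1%g (sval x)) (hP hu cu s (svalP x)) : sub_sSet cP n).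
  split; [|split].
  + by move=> m n f x s; apply: sig_eq_val => /=; rewrite ea_nat.
  + by move=> n x; apply: sig_eq_val => /=; rewrite ea_one // => i y; rewrite /amap eqxx.
  + by move=> n x; apply: sig_eq_val.
- apply: rst_sym; apply: rst_step.
  exists (fun n x s => exist _ (ea X (amap u s) 1%g (sval x)) (amap_fix hu s (svalP x)) : sub_sSet cQ n).
  split; [|split].
  + by move=> m n f x s; apply: sig_eq_val => /=; rewrite ea_nat.
  + by move=> n x; apply: sig_eq_val => /=; rewrite ea_one // => i y; rewrite /amap eqxx.
  + by move=> n x; apply: sig_eq_val.
Qed.
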